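(* Let $G$ be a finite simple connected graph that is simply connected, and let $v_0\in V(G)$. Then the cluster graph $\mathcal{C}(G)$ of $G$ with respect to $v_0$ is a tree.
   Context: For $i\ge 0$ let $S^i=\{v\in V(G): d(v_0,v)=i\}$ (graph distance). The clusters of $G$ with respect to $v_0$ are the vertex sets of the connected components of the induced subgraphs $G[S^i]$, $i\ge 0$; i.e. two vertices $u,v\in S^i$ are in the same cluster iff there is a path from $u$ to $v$ all of whose vertices lie in $S^i$. The cluster graph $\mathcal{C}(G)$ has the clusters as vertices, and two distinct clusters $C,C'$ are adjacent iff there exist $v\in C$, $v'\in C'$ with $vv'\in E(G)$. A loop in $G$ is a finite sequence of vertices $(v_0,\dots,v_k)$ with, for each $i<k$, $v_iv_{i+1}\in E(G)$ or $v_i=v_{i+1}$. Two loops $(v_0,\dots,v_{i-1},v_i,v_{i+1},\dots,v_k)$ and $(v_0,\dots,v_{i-1},v_{i+1},\dots,v_k)$ are related by an elementary homotopy (in either direction) if $v_i=v_{i+1}$, or $v_{i-1}=v_{i+1}$, or $v_{i-1}v_{i+1}\in E(G)$. A loop is contractible if it can be reduced to a single vertex by a finite sequence of elementary homotopies; $G$ is simply connected if every loop is contractible. *)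

(* Defs.v *)
From mathcomp Require Import ssreflect ssrfun ssrbool eqtype ssrnat seq path choice fintype tuple finset fingraph.
Set Implicit Arguments. Unset Strict Implicit. Unset Printing Implicit Defensive.

Section Graphs.
Variable T : finType.
Implicit Types (e : rel T) (x y : T).

Definition simple_graph e := symmetric e /\ irreflexive e.
Definition connected_graph e := forall x y, connect e x y.

Definition walk_len e n x y : bool :=
  [exists p : n.-tuple T, path e x p && (last x p == y)].

(* graph distance d(x,y): least length of a walk from x to y
   (a shortest walk has length < #|T|; default #|T| if unreachable) *)
Definition dist e x y : nat := find (fun n => walk_len e n x y) (iota 0 #|T|).

(* edges of the induced subgraph G[S^i] for the level sets S^i *)
Definition level_rel e v0 : rel T :=
  [rel x y | e x y && (dist e v0 x == dist e v0 y)].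

Definition same_cluster e v0 x y : bool := connect (level_rel e v0) x y.

Definition is_cluster e v0 (C : {set T}) : bool :=
  [exists x, C == [set y | same_cluster e v0 x y]].

Definition cluster e v0 := {C : {set T} | is_cluster e v0 C}.

Definition cluster_adj e v0 : rel (cluster e v0) :=
  fun C C' => (C != C') &&
    [exists u, exists v, [&& u \in val C, v \in val C' & e u v]].

Definition lstep e : rel T := fun x y => (x == y) || e x y.
Definition is_loop e (s : seq T) : Prop :=
  exists x p, s = x :: p /\ path (lstep e) x p /\ last x p = x.

(* one elementary homotopy (removal direction) *)
Inductive elem_red e : seq T -> seq T -> Prop :=
| ER_dup a x b : elem_red e (a ++ x :: x :: b) (a ++ x :: b)
| ER_tri a u x w b : (u == w) || e u w ->
    elem_red e (a ++ u :: x :: w :: b) (a ++ u :: w :: b).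

Definition elem_homotopy e (s t : seq T) : Prop :=
  is_loop e s /\ is_loop e t /\ (elem_red e s t \/ elem_red e t s).

Inductive homotopic e : seq T -> seq T -> Prop :=
| H_refl s : homotopic e s s
| H_step s t u : elem_homotopy e s t -> homotopic e t u -> homotopic e s u.

Definition contractible e (s : seq T) : Prop := exists v, homotopic e s [:: v].

Definition simply_connected e : Prop :=
  forall s, is_loop e s -> contractible e s.
End Graphs.
Arguments cluster_adj {T} e v0.

Section Trees.
Variable S : finType.
Definition has_graph_cycle (r : rel S) : Prop :=
  exists p : seq S, [/\ 3 <= size p, uniq p & cycle r p].
Definition is_tree (r : rel S) : Prop :=
  (forall x y, connect r x y) /\ ~ has_graph_cycle r.
End Trees.

(* Main.v *)
Require Import Defs.
From mathcomp Require Import ssreflect ssrfun ssrbool eqtype ssrnat seq path choice fintype tuple finset fingraph.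
From mathcomp Require Import zify.
Set Implicit Arguments. Unset Strict Implicit. Unset Printing Implicit Defensive.

Section Wsum.
Variable X : Type.
Variable h : X -> X -> nat.
Fixpoint wsum (x : X) (p : seq X) : nat :=
  if p is y :: q then h x y + wsum y q else 0.
Lemma wsum_cat x p q : wsum x (p ++ q) = wsum x p + wsum (last x p) q.
Proof. elim: p x => [|y p IH] x //=. by rewrite IH addnA. Qed.
Definition W (s : seq X) := if s is x :: p then wsum x p else 0.
Lemma W_cat a y q : W (a ++ y :: q) = W (rcons a y) + wsum y q.
Proof. case: a => [|a0 a] //=. rewrite -cats1 !wsum_cat /=. lia. Qed.
End Wsum.

Section Main.
Variable T : finType.
Variable e : rel T.
Variable v0 : T.
Hypothesis esym : symmetric e.
Hypothesis econn : connected_graph e.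

Lemma walk_lenP n x y :
  reflect (exists p, [/\ size p = n, path e x p & last x p = y]) (walk_len e n x y).
Proof.
apply: (iffP existsP) => [[p /andP[H1 /eqP H2]]|[p [Hs H1 H2]]].
  by exists p; rewrite size_tuple.
subst n; exists (in_tuple p); by rewrite /= H1 H2 eqxx.
Qed.

Lemma find_le (P : pred nat) N k : P k -> find P (iota 0 N) <= k.
Proof.
move=> Pk; case: (ltnP k N) => kN.
  rewrite leqNgt; apply/negP => Hlt.
  have := before_find 0 Hlt; rewrite nth_iota // add0n Pk; done.
by apply: leq_trans (find_size _ _) _; rewrite size_iota.
Qed.

Lemma dist_ub k x y : walk_len e k x y -> dist e x y <= k.
Proof. exact: find_le. Qed.

Lemma dist_walk x y : walk_len e (dist e x y) x y.
Proof.
have /connectP[p pp ->] := econn x y.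
case: (shortenP pp) => p' pp' up' _.
have Hs : size p' < #|T|.
  by have := max_card (mem (x :: p')); rewrite (card_uniqP up').
have Hw : walk_len e (size p') x (last x p') by apply/walk_lenP; exists p'.
have Hh : has (fun n => walk_len e n x (last x p')) (iota 0 #|T|).
  by apply/hasP; exists (size p'); rewrite ?mem_iota.
have := nth_find 0 Hh; rewrite /dist nth_iota ?add0n //.
by move: Hh; rewrite has_find size_iota.
Qed.

Lemma dist_edge a b : e a b -> dist e v0 b <= (dist e v0 a).+1.
Proof.
move=> eab; apply: dist_ub.
have /walk_lenP[p [Hs Hp Hl]] := dist_walk v0 a.
apply/walk_lenP; exists (rcons p b); split.
- by rewrite size_rcons Hs.
- by rewrite rcons_path Hp Hl.
- by rewrite last_rcons.
Qed.

Lemma level_sym : symmetric (level_rel e v0).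
Proof. by move=> x y; rewrite /level_rel /= esym eq_sym. Qed.

Lemma sc_sym : connect_sym (level_rel e v0).
Proof. exact: sym_connect_sym level_sym. Qed.

Definition clset x := [set y | same_cluster e v0 x y].
Lemma cl_proof x : is_cluster e v0 (clset x).
Proof. by apply/existsP; exists x. Qed.
Definition cl x : cluster e v0 := exist _ (clset x) (cl_proof x).

Lemma cl_eq x y : same_cluster e v0 x y -> cl x = cl y.
Proof.
move=> H; apply: val_inj => /=; apply/setP => z; rewrite !inE.
exact: (same_connect sc_sym H z).
Qed.

Lemma in_cl x : x \in val (cl x).
Proof. by rewrite inE; exact: connect0. Qed.

Lemma cl_mem (C : cluster e v0) u : u \in val C -> C = cl u.
Proof.
case: C => S /= H; have /existsP[x /eqP E] := H; subst S => Hu.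
rewrite inE in Hu; apply: val_inj; exact: (congr1 val (cl_eq Hu)).
Qed.

Lemma cl_surj (C : cluster e v0) : exists x, C = cl x.
Proof.
case: C => S H; have /existsP[x /eqP E] := H; exists x; apply: val_inj => /=.
exact: E.
Qed.

Lemma cl_same x y : cl x = cl y -> same_cluster e v0 x y.
Proof. by move=> E; have := in_cl y; rewrite -E inE. Qed.

Lemma edge_cl a b : e a b -> dist e v0 a = dist e v0 b -> cl a = cl b.
Proof.
move=> eab E; apply: cl_eq; apply: connect1; by rewrite /level_rel /= eab E eqxx.
Qed.

Lemma tri_cl u x w : lstep e u x -> lstep e x w -> (u == w) || e u w ->
  [\/ cl u = cl w, cl u = cl x | cl x = cl w].
Proof.
move=> /orP[/eqP->|ux]; first by move=> _ _; apply: Or32.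
move=> /orP[/eqP<-|xw]; first by move=> _; apply: Or33.
move=> /orP[/eqP<-|uw]; first by apply: Or31.
have xu : e x u by rewrite esym.
have wx : e w x by rewrite esym.
have wu : e w u by rewrite esym.
have h1 := dist_edge ux; have h2 := dist_edge xu; have h3 := dist_edge xw.
have h4 := dist_edge wx; have h5 := dist_edge uw; have h6 := dist_edge wu.
case: (eqVneq (dist e v0 u) (dist e v0 x)) => [E|/eqP N1].
  by apply: Or32; apply: edge_cl.
case: (eqVneq (dist e v0 x) (dist e v0 w)) => [E|/eqP N2].
  by apply: Or33; apply: edge_cl.
case: (eqVneq (dist e v0 u) (dist e v0 w)) => [E|/eqP N3].
  by apply: Or31; apply: edge_cl.
lia.
Qed.

Definition k (A B P Q : cluster e v0) : nat := (P == A) && (Q == B).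

Lemma kPP A B P : A != B -> k A B P P = 0.
Proof. rewrite /k => AB; case: (P =P A) => [->|] //=; by rewrite (negbTE AB). Qed.

Lemma key A B P Q R : A != B -> [\/ P = R, P = Q | Q = R] ->
  k A B P Q + k A B Q R + k B A P R = k A B P R + k B A P Q + k B A Q R.
Proof.
move=> AB; have BA : B != A by rewrite eq_sym.
case=> <-; rewrite ?(kPP _ AB) ?(kPP _ BA).
- have e1 : k A B P Q = k B A Q P by rewrite /k andbC.
  have e2 : k A B Q P = k B A P Q by rewrite /k andbC.
  lia.
- lia.
- lia.
Qed.

Definition hk A B := fun a b => k A B (cl a) (cl b).

Lemma loop_lstep a u x w b : is_loop e (a ++ u :: x :: w :: b) ->
  lstep e u x /\ lstep e x w.
Proof.
case=> y [p [E [Hp _]]]; move: Hp.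
case: a E => [|a0 a] /= [<- <-].
  by move=> /= /and3P[? ? _].
by rewrite cat_path => /andP[_ /= /and4P[_ ? ? _]].
Qed.

Section Inv.
Variables A B : cluster e v0.
Hypothesis AB : A != B.

Lemma red_inv s t : is_loop e s -> elem_red e s t ->
  W (hk A B) s + W (hk B A) t = W (hk A B) t + W (hk B A) s.
Proof.
have BA : B != A by rewrite eq_sym.
move=> Ls H; case: H Ls => [a x b | a u x w b Huw] Ls.
  rewrite !W_cat /= /hk (kPP _ AB) (kPP _ BA); lia.
have [Hux Hxw] := loop_lstep Ls.
have := key AB (tri_cl Hux Hxw Huw).
rewrite !W_cat /= /hk; lia.
Qed.

Lemma hom_inv s t : homotopic e s t ->
  W (hk A B) s + W (hk B A) t = W (hk A B) t + W (hk B A) s.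
Proof.
elim=> [s'|s1 s2 s3 [L1 [L2 [R|R]]] _ IH] //.
  have := red_inv L1 R; lia.
have := red_inv L2 R; lia.
Qed.
End Inv.

Lemma level_walk x p : path (level_rel e v0) x p -> path (lstep e) x p /\
  (forall k0, (forall P, k0 P P = 0) -> wsum (fun a b => k0 (cl a) (cl b)) x p = 0).
Proof.
elim: p x => [|z p IH] x //= /andP[Hxz Hp].
have [H1 H2] := IH _ Hp.
have Ecl : cl x = cl z by apply: cl_eq; apply: connect1.
split; first by move: Hxz; rewrite /level_rel /= /lstep => /andP[-> _]; rewrite H1 orbT.
by move=> k0 kP; rewrite H2 // Ecl kP.
Qed.

Lemma in_walk x y : cl x = cl y -> exists p, [/\ path (lstep e) x p, last x p = y &
  forall k0, (forall P, k0 P P = 0) -> wsum (fun a b => k0 (cl a) (cl b)) x p = 0].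
Proof.
move=> /cl_same /connectP[p pp ->]; have [H1 H2] := level_walk pp.
by exists p.
Qed.

Lemma lift (q : seq (cluster e v0)) C : path (cluster_adj e v0) C q ->
  forall x y, cl x = C -> cl y = last C q -> exists p,
  [/\ path (lstep e) x p, last x p = y &
  forall k0, (forall P, k0 P P = 0) ->
    wsum (fun a b => k0 (cl a) (cl b)) x p = wsum k0 C q].
Proof.
elim: q C => [|D q IH] C /=.
  move=> _ x y <- Ey; have [p [H1 H2 H3]] := in_walk (sym_equal Ey).
  by exists p; split.
move=> /andP[/andP[_ /existsP[u /existsP[v /and3P[Hu Hv euv]]]] Hq] x y Ex Ey.
have EC := cl_mem Hu; have ED := cl_mem Hv.
have [p1 [P1 L1 W1]] := in_walk (etrans Ex EC).
have [p2 [P2 L2 W2]] := IH D Hq v y (sym_equal ED) Ey.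
exists (p1 ++ v :: p2); split.
- by rewrite cat_path P1 L1 /= /lstep euv orbT P2.
- by rewrite last_cat L1.
- move=> k0 kP; rewrite wsum_cat W1 // L1 /= W2 // EC ED.
  by rewrite add0n.
Qed.

Lemma wsum_k0 A B c r : c != A -> A \notin r -> wsum (k A B) c r = 0.
Proof.
elim: r c => [|d r IH] c //= cA; rewrite inE negb_or => /andP[dA Ar].
rewrite IH //; first by rewrite /k (negbTE cA).
by rewrite eq_sym.
Qed.

End Main.

Theorem mainTheorem3 (T : finType) (e : rel T) (v0 : T) :
  simple_graph e -> connected_graph e -> simply_connected e ->
  is_tree (cluster_adj e v0).
Proof.
move=> [esym eirr] econn scon; split.
  move=> C D; have [x ->] := cl_surj C; have [y ->] := cl_surj D.
  have /connectP[p pp ->] := econn x y.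
  elim: p x pp => [|z p IH] x /=; first by move=> _; exact: connect0.
  move=> /andP[exz pp]; apply: connect_trans (IH z pp).
  case: (eqVneq (cl e v0 x) (cl e v0 z)) => [->|ne]; first exact: connect0.
  apply: connect1; rewrite /cluster_adj ne /=.
  apply/existsP; exists x; apply/existsP; exists z; by rewrite !in_cl exz.
case=> p [Hs Hu Hc].
case: p Hs Hu Hc => [|C1 [|C2 [|C3 ps]]] // _ Hu Hc.
move: Hu; rewrite /= !inE !negb_or => Hu.
move: Hu => /and4P[/and3P[n12 n13 n1ps] /andP[n23 n2ps] _ _].
have n21 : C2 != C1 by rewrite eq_sym.
have Hc' : path (cluster_adj e v0) C1 (rcons [:: C2, C3 & ps] C1) := Hc.
have [x Ex] := cl_surj C1.
have L : cl e v0 x = last C1 (rcons [:: C2, C3 & ps] C1) by rewrite last_rcons.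
have [p [Pp Lp Wp]] := lift esym Hc' (x:=x) (y:=x) (sym_equal Ex) L.
have [v Hv] := scon (x :: p) (ex_intro _ x (ex_intro _ p (conj erefl (conj Pp Lp)))).
have := hom_inv esym econn n12 Hv; rewrite /= /hk.
rewrite (Wp _ (fun P => kPP P n12)) (Wp _ (fun P => kPP P n21)) /=.
have -> : k C1 C2 C1 C2 = 1 by rewrite /k !eqxx.
have -> : k C2 C1 C1 C2 = 0 by rewrite /k (negbTE n12).
have -> : k C2 C1 C2 C3 = 0 by rewrite /k eq_sym (negbTE n13) andbF.
rewrite [wsum (k C2 C1) _ _]wsum_k0; first by move=> /eqP; rewrite addn0 add1n.
  by rewrite eq_sym.
by rewrite mem_rcons inE negb_or n21.
Qed.
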